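(* Let $n\ge5$, $x_1,\dots,x_{n-1}>0$, $\gamma,\delta>0$ with $\gamma\ne1\ne\delta$, $x_0=1$, and let $\mathbf{R}$ be the $n\times n$ matrix with entries $r_{ij}=x_{j-1}/x_{i-1}$ except $r_{12}=\delta x_1$, $r_{21}=1/(\delta x_1)$, $r_{34}=\gamma x_3/x_2$, $r_{43}=x_2/(\gamma x_3)$. Let $\mathbf{w}^{EM}$ be its principal right eigenvector. Then for $i=5,\dots,n$: $\delta>1$ iff $w_1^{EM}/w_i^{EM}>x_{i-1}$, and $\delta<1$ iff $w_1^{EM}/w_i^{EM}<x_{i-1}$.
   Context: The principal right eigenvector is the positive (Perron) eigenvector belonging to the largest eigenvalue. *)

(* Defs.v *)
From HB Require Import structures.
From mathcomp Require Import all_boot all_order all_algebra.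
From mathcomp Require Import reals.
Set Implicit Arguments. Unset Strict Implicit. Unset Printing Implicit Defensive.
Import Order.TTheory GRing.Theory Num.Theory.
Local Open Scope ring_scope.

(* Indices are 0-based: paper index i (1..n) is Rocq index i-1 : 'I_n.
   x : nat -> R with x 0 = 1 (paper's x_0 = 1). *)
Definition EM_matrix (R : realType) (n : nat) (x : nat -> R) (gamma delta : R)
  : 'M[R]_n :=
  \matrix_(i < n, j < n)
    if (val i == 0%N) && (val j == 1%N) then delta * x 1%N
    else if (val i == 1%N) && (val j == 0%N) then (delta * x 1%N)^-1
    else if (val i == 2%N) && (val j == 3%N) then gamma * x 3%N / x 2%N
    else if (val i == 3%N) && (val j == 2%N) then x 2%N / (gamma * x 3%N)
    else x (val j) / x (val i).

Definition principal_right_eigenvector (R : realType) (n : nat)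
  (A : 'M[R]_n) (w : 'cV[R]_n) : Prop :=
  exists lam : R,
    [/\ eigenvalue A lam,
        (forall mu : R, eigenvalue A mu -> mu <= lam),
        A *m w = lam *: w
      & forall i : 'I_n, 0 < w i 0].

(* Main.v *)
Require Import Defs.
From HB Require Import structures.
From mathcomp Require Import all_boot all_order all_algebra.
From mathcomp Require Import reals.
From mathcomp Require Import lra.
Import Order.TTheory GRing.Theory Num.Theory.
Local Open Scope ring_scope.

Theorem mainTheorem17 (R : realType) (n : nat) (x : nat -> R) (gamma delta : R)
  (w : 'cV[R]_n) :
  (5 <= n)%N ->
  x 0%N = 1 ->
  (forall k : nat, (1 <= k < n)%N -> 0 < x k) ->
  0 < gamma -> 0 < delta -> gamma != 1 -> delta != 1 ->
  principal_right_eigenvector (EM_matrix n x gamma delta) w ->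
  forall i0 i : 'I_n, val i0 = 0%N -> (4 <= val i)%N ->
    ((1 < delta) <-> (x (val i) < w i0 0 / w i 0)) /\
    ((delta < 1) <-> (w i0 0 / w i 0 < x (val i))).
Proof.
move=> n5 x0 xpos gpos dpos g1 d1 [lam [_ _ Hev wpos]] i0 i Hi0 Hi.
have xp : forall j : 'I_n, 0 < x (val j).
  move=> j; case: (posnP (val j)) => [->|jp]; first by rewrite x0 ltr01.
  by apply: xpos; rewrite jp ltn_ord.
have ltn1 : (1 < n)%N by apply: leq_trans n5.
pose j1 : 'I_n := Ordinal ltn1.
set S := \sum_j x (val j) * w j 0.
have Spos : 0 < S.
  rewrite /S (bigD1 i) //=.
  have h1 : 0 <= \sum_(j < n | j != i) x (val j) * w j 0.
    by apply: sumr_ge0 => j _; apply: mulr_ge0; apply: ltW.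
  have h2 : 0 < x (val i) * w i 0 by apply: mulr_gt0.
  lra.
have Ei : lam * w i 0 = S / x (val i).
  have := congr1 (fun M : 'M[R]_(n,1) => M i 0) Hev; rewrite !mxE => <-.
  rewrite /S mulr_suml; apply: eq_bigr => j _; rewrite !mxE.
  have -> : (val i == 0%N) = false by apply/negbTE; rewrite -lt0n; apply: leq_trans Hi.
  have -> : (val i == 1%N) = false by apply/negbTE; apply/eqP => E; rewrite E in Hi.
  have -> : (val i == 2%N) = false by apply/negbTE; apply/eqP => E; rewrite E in Hi.
  have -> : (val i == 3%N) = false by apply/negbTE; apply/eqP => E; rewrite E in Hi.
  by rewrite /= mulrAC.
have E0 : lam * w i0 0 = S + (delta - 1) * x 1%N * w j1 0.
  have := congr1 (fun M : 'M[R]_(n,1) => M i0 0) Hev; rewrite !mxE => <-.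
  have -> : \sum_j EM_matrix n x gamma delta i0 j * w j 0 =
     \sum_j (x (val j) * w j 0 + (if j == j1 then (delta - 1) * x 1%N * w j 0 else 0)).
    apply: eq_bigr => j _; rewrite !mxE Hi0 /=.
    case: (eqVneq j j1) => [->|ne] /=.
      by rewrite mulrBl mul1r mulrBl addrCA subrr addr0.
    have -> : (val j == 1%N) = false.
      by apply/negbTE; apply: contra ne => /eqP E; apply/eqP; apply: val_inj.
    by rewrite x0 divr1 addr0.
  by rewrite big_split /= -big_mkcond big_pred1_eq.
have lampos : 0 < lam.
  have : 0 < lam * w i 0 by rewrite Ei divr_gt0.
  by rewrite pmulr_lgt0.
have c : 0 < x 1%N * w j1 0 by apply: mulr_gt0; [exact: (xp j1)|].
have key : lam * (w i0 0 - x (val i) * w i 0) = (delta - 1) * (x 1%N * w j1 0).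
  rewrite mulrBr E0 mulrCA Ei mulrCA divff ?mulr1; last by rewrite gt_eqF.
  by rewrite addrAC subrr add0r mulrA.
have wi := wpos i; have xi := xp i.
rewrite ltr_pdivlMr // ltr_pdivrMr //; split.
- rewrite -subr_gt0 -(pmulr_lgt0 _ c) -key pmulr_rgt0 // subr_gt0.
  by [].
- rewrite -subr_lt0 -(pmulr_llt0 _ c) -key pmulr_rlt0 // subr_lt0.
  by [].
Qed.
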